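(* Let $A_1$ and $A_2$ be two Jordan-Lie algebras, either both classical or both quantum (see context), and suppose $A_1$ has a Casimir element $C$, i.e. $[C,a]=0$ for all $a\in A_1$. Suppose there is a linear map $\phi: A_1\to A_1\otimes A_2$ which is a Jordan-Lie algebra homomorphism: $$[\phi(a),\phi(b)]=\phi([a,b]),\qquad \phi(a\circ b)=\phi(a)\circ\phi(b)\qquad \forall a,b\in A_1 .$$ Fix an integer $N\ge 2$ and define recursively $\phi^{(2)}=\phi$ and $$\phi^{(i)}=(\phi^{(2)}\otimes \underbrace{id\otimes\cdots\otimes id}_{i-2})\circ\phi^{(i-1)},\qquad i=3,\dots,N,$$ so that $\phi^{(i)}:A_1\to A_1\otimes \underbrace{A_2\otimes\cdots\otimes A_2}_{i-1}$. For $i=2,\dots,N$ set $$C^{(i)}=\phi^{(i)}(C)\otimes\underbrace{1\otimes\cdots\otimes 1}_{N-i}\in A_1\otimes\underbrace{A_2\otimes\cdots\otimes A_2}_{N-1}.$$ Then the elements $C^{(2)},\dots,C^{(N)}$ pairwise commute in $A_1\otimes A_2^{\otimes(N-1)}$, i.e. $[C^{(i)},C^{(j)}]=0$ for all $2\le i,j\le N$. Moreover, $[\phi^{(N)}(a),C^{(i)}]=0$ for all $a\in A_1$ and all $i=2,\dots,N$.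
   Context: A generalized Jordan-Lie algebra is a vector space $\mathcal A$ (with unit $1$) equipped with two bilinear operations $\circ$ and $[\cdot,\cdot]$ with values in $\mathcal A$ such that for all $a,b,c$: $(a\circ b)\circ c=a\circ(b\circ c)$; $[a,b]=-[b,a]$; $[a,[b,c]]+[c,[a,b]]+[b,[c,a]]=0$; and $[a,b\circ c]=b\circ[a,c]+[a,b]\circ c$. A classical Jordan-Lie algebra (CJL) is one in which $\circ$ is commutative (e.g. a Poisson algebra of functions with pointwise product and Poisson bracket); a quantum Jordan-Lie algebra (QJL) is one in which $[a,b]=a\circ b-b\circ a$. For two such algebras $A,B$ (both CJL or both QJL), $A\otimes B$ is again such an algebra with $(a\otimes b)\circ(a'\otimes b')=(a\circ a')\otimes(b\circ b')$ and $[a\otimes b,a'\otimes b']=[a,a']\otimes (b\circ b')+(a'\circ a)\otimes[b,b']$; iterated tensor products are given this structure. Products/brackets of elements are written without subscripts indicating the space. *)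

(* Defs.v *)
From HB Require Import structures.
From mathcomp Require Import all_boot all_order all_algebra.
Set Implicit Arguments. Unset Strict Implicit. Unset Printing Implicit Defensive.
Import Order.TTheory GRing.Theory Num.Theory.
Local Open Scope ring_scope.

Section JL.
Variable K : fieldType.

Definition is_linear (U V : lmodType K) (f : U -> V) : Prop :=
  forall (c : K) (u v : U), f (c *: u + v) = c *: f u + f v.

Definition is_bilinear (U V W : lmodType K) (f : U -> V -> W) : Prop :=
  (forall v : V, is_linear (fun u => f u v)) /\ (forall u : U, is_linear (f u)).

Definition JL_algebra (A : lmodType K) (mul br : A -> A -> A) (one : A) : Prop :=
  is_bilinear mul /\ is_bilinear br /\
  (forall a, mul one a = a /\ mul a one = a) /\
  (forall a b c, mul (mul a b) c = mul a (mul b c)) /\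
  (forall a b, br a b = - br b a) /\
  (forall a b c, br a (br b c) + br c (br a b) + br b (br c a) = 0) /\
  (forall a b c, br a (mul b c) = mul b (br a c) + mul (br a b) c).

Definition JL_classical (A : lmodType K) (mul : A -> A -> A) : Prop :=
  forall a b, mul a b = mul b a.

Definition JL_quantum (A : lmodType K) (mul br : A -> A -> A) : Prop :=
  forall a b, br a b = mul a b - mul b a.

Definition is_tensor_product (X Y Z : lmodType K) (tens : X -> Y -> Z) : Prop :=
  is_bilinear tens /\
  forall (U : lmodType K) (f : X -> Y -> U), is_bilinear f ->
    exists g : Z -> U, [/\ is_linear g, (forall x y, g (tens x y) = f x y)
      & forall g' : Z -> U, is_linear g' -> (forall x y, g' (tens x y) = f x y) ->
          forall z, g' z = g z].

(* Iterated tensor products: T n stands for A1 (x) A2 (x) ... (x) A2 (n copies of A2),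
   left-nested: T n.+1 = T n (x) A2 via tens n. *)
Variable T : nat -> lmodType K.
Variable A2 : lmodType K.
Variable tens : forall n, T n -> A2 -> T n.+1.
Variable one2 : A2.

Fixpoint pad (d : nat) n (x : T n) : T (d + n)%N :=
  match d with
  | 0 => x
  | d'.+1 => tens (pad d' x) one2
  end.

Definition castT m n (e : m = n) (x : T m) : T n :=
  eq_rect m (fun k => T k : Type) x n e.

(* pad x in T n up to T M (meaningful for n <= M; 0 otherwise) *)
Definition padTo n M (x : T n) : T M :=
  match (n <= M)%N as b return ((n <= M)%N = b -> T M) with
  | true => fun h => castT (subnK h) (pad (M - n)%N x)
  | false => fun _ => 0
  end erefl.

(* Phi k = phi (x) id (x) ... (x) id (k copies of id) : T k -> T k.+1 *)
Variable Phi : forall k, T k -> T k.+1.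

(* phis n = phi^(n+1) : T 0%N -> T n, with phi^(1) = id, phi^(2) = phi,
   phi^(i) = (phi (x) id^(i-2)) o phi^(i-1). *)
Fixpoint phis (n : nat) : T 0%N -> T n :=
  match n with
  | 0 => fun x => x
  | n'.+1 => fun x => Phi (phis n' x)
  end.

End JL.

(* Main.v *)
Require Import Defs.
From HB Require Import structures.
From mathcomp Require Import all_boot all_order all_algebra.
Import GRing.Theory.
Local Open Scope ring_scope.

Lemma padToE (K : fieldType) (T : nat -> lmodType K) (A2 : lmodType K)
  (tens : forall n, T n -> A2 -> T n.+1) (one2 : A2) n M (x : T n)
  (h : (n <= M)%N) d (e : (d + n)%N = M) :
  padTo tens one2 M x = castT e (pad tens one2 d x).
Proof.
rewrite /padTo.
move: (erefl (n <= M)%N).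
have H : forall b (E : (n <= M)%N = b),
  (match b as b0 return ((n <= M)%N = b0 -> T M) with
   | true => fun h0 => castT (subnK h0) (pad tens one2 (M - n) x)
   | false => fun _ => 0 end) E = castT e (pad tens one2 d x).
  case=> E.
    have ed : d = (M - n)%N by rewrite -e addnK.
    subst d. congr castT; exact: eq_irrelevance.
  by rewrite h in E.
exact: H.
Qed.

Lemma padTo_id (K : fieldType) (T : nat -> lmodType K) (A2 : lmodType K)
  (tens : forall n, T n -> A2 -> T n.+1) (one2 : A2) n (x : T n) :
  padTo tens one2 n x = x.
Proof. by rewrite (@padToE _ _ _ _ _ n n x (leqnn n) 0 erefl). Qed.

Lemma padTo_S (K : fieldType) (T : nat -> lmodType K) (A2 : lmodType K)
  (tens : forall n, T n -> A2 -> T n.+1) (one2 : A2) n M (x : T n) :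
  (n <= M)%N -> padTo tens one2 M.+1 x = tens M (padTo tens one2 M x) one2.
Proof.
move=> h.
have [d ->] : exists d, M = (d + n)%N by exists (M - n)%N; rewrite subnK.
rewrite (@padToE _ _ _ _ _ n (d + n) x (leq_addl d n) d erefl).
have h2 : (n <= (d + n).+1)%N by rewrite ltnW // ltnS leq_addl.
by rewrite (@padToE _ _ _ _ _ n (d + n).+1 x h2 d.+1 (erefl : (d.+1 + n)%N = (d + n).+1)).
Qed.

Lemma le_ind n (P : nat -> Prop) : P n -> (forall M, (n <= M)%N -> P M -> P M.+1) ->
  forall M, (n <= M)%N -> P M.
Proof.
move=> P0 PS; elim=> [|M IH].
  by rewrite leqn0 => /eqP <-.
rewrite leq_eqVlt => /orP[/eqP <- // | ]; rewrite ltnS => h.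
exact: PS h (IH h).
Qed.

Lemma lin0 (K : fieldType) (U V : lmodType K) (f : U -> V) : is_linear f -> f 0 = 0.
Proof.
move=> l; have := l 1 0 0; rewrite !scale1r addr0 => H.
by apply: (addrI (f 0)); rewrite addr0 -H.
Qed.

Lemma linD (K : fieldType) (U V : lmodType K) (f : U -> V) : is_linear f ->
  forall u v, f (u + v) = f u + f v.
Proof. by move=> l u v; have := l 1 u v; rewrite !scale1r. Qed.

Lemma lin_comp (K : fieldType) (U V W : lmodType K) (f : U -> V) (g : V -> W) :
  is_linear f -> is_linear g -> is_linear (fun u => g (f u)).
Proof. by move=> lf lg c u v; rewrite lf lg. Qed.

Lemma lin_zero (K : fieldType) (U V : lmodType K) : is_linear (fun _ : U => (0 : V)).
Proof. by move=> c u v; rewrite scaler0 addr0. Qed.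

Lemma xxx (K : fieldType) (V : lmodType K) (x : V) : x = x + x -> x = 0.
Proof. by move=> H; apply: (addrI x); rewrite addr0 -H. Qed.

Arguments lin0 {K U V f}.
Arguments linD {K U V f}.
Arguments lin_comp {K U V W f g}.
Arguments lin_zero {K U V}.
Arguments xxx {K V x}.
Arguments padTo_id {K T A2 tens one2 n}.
Arguments padTo_S {K T A2 tens one2 n M x}.

Theorem theorem1 (K : fieldType) (T : nat -> lmodType K) (A2 : lmodType K)
  (tens : forall n, T n -> A2 -> T n.+1)
  (mul br : forall n, T n -> T n -> T n) (one : forall n, T n)
  (mul2 br2 : A2 -> A2 -> A2) (one2 : A2)
  (HT : forall n, is_tensor_product (@tens n))
  (HA1 : JL_algebra (mul 0%N) (br 0%N) (one 0%N))
  (HA2 : JL_algebra mul2 br2 one2)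
  (Hkind : (JL_classical (mul 0%N) /\ JL_classical mul2) \/
           (JL_quantum (mul 0%N) (br 0%N) /\ JL_quantum mul2 br2))
  (Hmul_bil : forall n, is_bilinear (mul n))
  (Hbr_bil : forall n, is_bilinear (br n))
  (Hmul_tens : forall n x y a b,
     mul n.+1 (tens n x a) (tens n y b) = tens n (mul n x y) (mul2 a b))
  (Hbr_tens : forall n x y a b,
     br n.+1 (tens n x a) (tens n y b) =
       tens n (br n x y) (mul2 a b) + tens n (mul n y x) (br2 a b))
  (Hone_tens : forall n, one n.+1 = tens n (one n) one2)
  (C : T 0%N) (HC : forall a, br 0%N C a = 0)
  (phi : T 0%N -> T 1%N) (Hphi_lin : is_linear phi)
  (Hphi_br : forall a b, br 1%N (phi a) (phi b) = phi (br 0%N a b))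
  (Hphi_mul : forall a b, mul 1%N (phi a) (phi b) = phi (mul 0%N a b))
  (Phi : forall k, T k -> T k.+1)
  (HPhi_lin : forall k, is_linear (@Phi k))
  (HPhi0 : forall x, Phi 0%N x = phi x)
  (HPhiS : forall k x a, Phi k.+1 (tens k x a) = tens k.+1 (Phi k x) a)
  (N : nat) (HN : (2 <= N)%N) :
  (forall i j, (2 <= i <= N)%N -> (2 <= j <= N)%N ->
     br (N.-1) (padTo tens one2 N.-1 (phis Phi i.-1 C))
               (padTo tens one2 N.-1 (phis Phi j.-1 C)) = 0) /\
  (forall a i, (2 <= i <= N)%N ->
     br (N.-1) (phis Phi N.-1 a) (padTo tens one2 N.-1 (phis Phi i.-1 C)) = 0).
Proof.
case: HA2 => [[m2l m2r] [[b2l b2r] [hone2 [_ [anti2 [_ leib2]]]]]].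
case: HA1 => [_ [_ [_ [_ [anti1 _]]]]].
have br2_r1 : forall a, br2 a one2 = 0.
  move=> a; apply: xxx; have := leib2 a one2 one2.
  by rewrite (hone2 one2).1 (hone2 _).1 (hone2 _).2.
have br2_1l : forall a, br2 one2 a = 0 by move=> a; rewrite anti2 br2_r1 oppr0.
have tens0l : forall n a, tens n 0 a = 0.
  by move=> n a; case: (HT n) => [[tl _] _]; by have /= := lin0 (tl a).
have tens0r : forall n x, tens n x 0 = 0.
  by move=> n x; case: (HT n) => [[_ tr] _]; by have /= := lin0 (tr x).
have ext : forall n (U : lmodType K) (g1 g2 : T n.+1 -> U), is_linear g1 -> is_linear g2 ->
    (forall x a, g1 (tens n x a) = g2 (tens n x a)) -> forall z, g1 z = g2 z.
  move=> n U g1 g2 l1 l2 H z.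
  case: (HT n) => [[tl tr] univ].
  have bil : is_bilinear (fun x a => g1 (tens n x a)).
    split=> [a c u v | x c u v] /=.
      by have /= -> := tl a c u v; exact: l1.
    by have /= -> := tr x c u v; exact: l1.
  case: (univ U _ bil) => g [_ Hg Hu].
  by rewrite (Hu g1 l1 (fun _ _ => erefl)) (Hu g2 l2 (fun x a => esym (H x a))).
have brl : forall n y, is_linear (fun x => br n x y) by move=> n; case: (Hbr_bil n).
have brr : forall n x, is_linear (br n x) by move=> n; case: (Hbr_bil n).
have mull : forall n y, is_linear (fun x => mul n x y) by move=> n; case: (Hmul_bil n).
have mulr : forall n x, is_linear (mul n x) by move=> n; case: (Hmul_bil n).
have Hhom : forall k x y, br k.+1 (Phi k x) (Phi k y) = Phi k (br k x y) /\
                          mul k.+1 (Phi k x) (Phi k y) = Phi k (mul k x y).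
  elim=> [|k IH] x y.
    by rewrite !HPhi0; split; [exact: Hphi_br | exact: Hphi_mul].
  have Hp : forall u a y, br k.+2 (Phi k.+1 (tens k u a)) (Phi k.+1 y) =
                            Phi k.+1 (br k.+1 (tens k u a) y) /\
                          mul k.+2 (Phi k.+1 (tens k u a)) (Phi k.+1 y) =
                            Phi k.+1 (mul k.+1 (tens k u a) y).
    move=> u a {}y; split; move: y; apply: ext.
    - exact: lin_comp (HPhi_lin _) (brr _ _).
    - exact: lin_comp (brr _ _) (HPhi_lin _).
    - move=> v b; rewrite !HPhiS !Hbr_tens (IH u v).1 (IH v u).2 linD //.
      by rewrite !HPhiS.
    - exact: lin_comp (HPhi_lin _) (mulr _ _).
    - exact: lin_comp (mulr _ _) (HPhi_lin _).
    - move=> v b; rewrite !HPhiS !Hmul_tens (IH u v).2.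
      by rewrite HPhiS.
  split; move: x; apply: ext.
  - exact: lin_comp (HPhi_lin _) (brl _ _).
  - exact: lin_comp (brl _ _) (HPhi_lin _).
  - by move=> u a; rewrite (Hp u a y).1.
  - exact: lin_comp (HPhi_lin _) (mull _ _).
  - exact: lin_comp (mull _ _) (HPhi_lin _).
  - by move=> u a; rewrite (Hp u a y).2.
have L1 : forall n M, (n <= M)%N -> forall x y,
    br M (padTo tens one2 M x) (padTo tens one2 M y) = padTo tens one2 M (br n x y).
  move=> n; apply: le_ind => [|M h IH] x y; first by rewrite !padTo_id.
  by rewrite !(padTo_S h) Hbr_tens IH (hone2 _).1 br2_r1 tens0r addr0.
have P0 : forall n M, (n <= M)%N -> padTo tens one2 M (0 : T n) = 0.
  move=> n; apply: le_ind => [|M h IH]; first by rewrite padTo_id.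
  by rewrite (padTo_S h) IH tens0l.
have L2 : forall n m, (n <= m)%N -> forall M, (m <= M)%N -> forall x : T n,
    padTo tens one2 M (padTo tens one2 m x) = padTo tens one2 M x.
  move=> n m hnm; apply: le_ind => [|M h IH] x; first by rewrite padTo_id.
  by rewrite (padTo_S h) IH (padTo_S (leq_trans hnm h)).
have L3 : forall n M, (n <= M)%N -> forall x : T n,
    Phi M (padTo tens one2 M x) = padTo tens one2 M.+1 (Phi n x).
  move=> n; apply: le_ind => [|M h IH] x; first by rewrite !padTo_id.
  by rewrite (padTo_S h) HPhiS IH (padTo_S (n := n.+1) (M := M.+1) h).
have central : forall M z, br M (padTo tens one2 M C) z = 0 /\
                           br M z (padTo tens one2 M C) = 0.
  elim=> [|M IH] z.
    by rewrite padTo_id HC anti1 HC oppr0.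
  rewrite (padTo_S (leq0n M)); split; move: z; apply: ext.
  - exact: brr.
  - exact: lin_zero.
  - by move=> x a; rewrite Hbr_tens (IH x).1 tens0l br2_1l tens0r addr0.
  - exact: brl.
  - exact: lin_zero.
  - by move=> x a; rewrite Hbr_tens (IH x).2 tens0l br2_r1 tens0r addr0.
have S : forall k M, (k <= M)%N -> forall a,
    br M (phis Phi M a) (padTo tens one2 M (phis Phi k C)) = 0 /\
    br M (padTo tens one2 M (phis Phi k C)) (phis Phi M a) = 0.
  elim=> [|k IH] M h a.
    by split; [exact: (central M _).2 | exact: (central M _).1].
  case: M h => [//|M] h.
  have -> : padTo tens one2 M.+1 (phis Phi k.+1 C) =
            Phi M (padTo tens one2 M (phis Phi k C)) by rewrite (L3 k M h).
  change (phis Phi M.+1 a) with (Phi M (phis Phi M a)).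
  rewrite !(Hhom _ _ _).1 (IH M h a).1 (IH M h a).2.
  by split; exact: (lin0 (HPhi_lin M)).
have le1 : forall i, (i <= N)%N -> (i.-1 <= N.-1)%N.
  by move=> i iN; rewrite -!subn1 leq_sub2r.
split.
  move=> i j /andP[_ /le1 hi] /andP[_ /le1 hj].
  case: (leqP i.-1 j.-1) => hij.
    rewrite -(L2 _ _ hij _ hj) L1 // (S _ _ hij C).2.
    exact: P0.
  rewrite -(L2 _ _ (ltnW hij) _ hi) L1 // (S _ _ (ltnW hij) C).1.
  exact: P0.
by move=> a i /andP[_ /le1 hi]; exact: (S _ _ hi a).1.
Qed.
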